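(* Assume $\mathbf A$ has full column rank, $\mathrm{var}(\tilde{\mathbf x})>0$, $\mathrm{var}(\tilde{\mathbf y})>0$, and $\boldsymbol\Pi_{\mathbf A}^\perp\dot{\mathbf a}_{\mathrm u}(\tilde{\mathbf q},\mathbf r_k)\neq\mathbf 0$, $\boldsymbol\Pi_{\mathbf A}^\perp\dot{\mathbf a}_{\mathrm v}(\tilde{\mathbf q},\mathbf r_k)\neq\mathbf 0$. Then for each $k$, $$\omega_{\mathrm u,k}\le\frac{4\pi^2N}{\lambda^2}\Big(\mathrm{var}(\tilde{\mathbf x})-\frac{\mathrm{cov}(\tilde{\mathbf x},\tilde{\mathbf y})^2}{\mathrm{var}(\tilde{\mathbf y})}\Big),\qquad \omega_{\mathrm v,k}\le\frac{4\pi^2N}{\lambda^2}\Big(\mathrm{var}(\tilde{\mathbf y})-\frac{\mathrm{cov}(\tilde{\mathbf x},\tilde{\mathbf y})^2}{\mathrm{var}(\tilde{\mathbf x})}\Big),$$ with equality in the first inequality if and only if $\mathbf A^{\mathsf H}\boldsymbol\Pi_k^\perp\big(\dot{\mathbf a}_{\mathrm u}(\tilde{\mathbf q},\mathbf r_k)-\zeta^*_{\mathrm u,k}\dot{\mathbf a}_{\mathrm v}(\tilde{\mathbf q},\mathbf r_k)\big)=\mathbf 0_{K\times1}$, and equality in the second if and only if $\mathbf A^{\mathsf H}\boldsymbol\Pi_k^\perp\big(\dot{\mathbf a}_{\mathrm v}(\tilde{\mathbf q},\mathbf r_k)-\zeta^*_{\mathrm v,k}\dot{\mathbf a}_{\mathrm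 u}(\tilde{\mathbf q},\mathbf r_k)\big)=\mathbf 0_{K\times1}$.
   Context: Fix $N>K\ge1$, $\lambda>0$. Antenna positions $\mathbf q_n=[x_n,y_n]^{\mathsf T}\in\mathbb R^2$ ($n=1,\dots,N$), $\tilde{\mathbf x}=[x_1,\dots,x_N]^{\mathsf T}$, $\tilde{\mathbf y}=[y_1,\dots,y_N]^{\mathsf T}$; target coordinates $\mathbf r_k=[u_k,v_k]^{\mathsf T}\in\mathbb R^2$, $k=1,\dots,K$. Steering vector $\mathbf a(\tilde{\mathbf q},\mathbf r)\in\mathbb C^N$ with $n$-th entry $e^{\mathrm j\frac{2\pi}{\lambda}\mathbf q_n^{\mathsf T}\mathbf r}$; $\mathbf A=[\mathbf a(\tilde{\mathbf q},\mathbf r_1),\dots,\mathbf a(\tilde{\mathbf q},\mathbf r_K)]$. $\dot{\mathbf a}_{\mathrm u}(\tilde{\mathbf q},\mathbf r_k)$ has $n$-th entry $\mathrm j\frac{2\pi}{\lambda}x_ne^{\mathrm j\frac{2\pi}{\lambda}\mathbf q_n^{\mathsf T}\mathbf r_k}$ and $\dot{\mathbf a}_{\mathrm v}(\tilde{\mathbf q},\mathbf r_k)$ has $n$-th entry $\mathrm j\frac{2\pi}{\lambda}y_ne^{\mathrm j\frac{2\pi}{\lambda}\mathbf q_n^{\mathsf T}\mathbf r_k}$. $\boldsymbol\Pi_{\mathbf A}^\perp=\mathbf I_N-\mathbf A(\mathbf A^{\mathsf H}\mathbf A)^{-1}\mathbf A^{\mathsf H}$ and $\boldsymbol\Pi_k^\perp=\mathbf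 I_N-\mathbf a(\tilde{\mathbf q},\mathbf r_k)\mathbf a(\tilde{\mathbf q},\mathbf r_k)^{\mathsf H}/\|\mathbf a(\tilde{\mathbf q},\mathbf r_k)\|_2^2$. Effective sensitivity powers: $\omega_{\mathrm u,k}=\min_{\zeta\in\mathbb R}\|\boldsymbol\Pi_{\mathbf A}^\perp(\dot{\mathbf a}_{\mathrm u}(\tilde{\mathbf q},\mathbf r_k)-\zeta\dot{\mathbf a}_{\mathrm v}(\tilde{\mathbf q},\mathbf r_k))\|_2^2=\|\boldsymbol\Pi_{\mathbf A}^\perp\dot{\mathbf a}_{\mathrm u}\|_2^2-\frac{\Re\{\dot{\mathbf a}_{\mathrm u}^{\mathsf H}\boldsymbol\Pi_{\mathbf A}^\perp\dot{\mathbf a}_{\mathrm v}\}^2}{\|\boldsymbol\Pi_{\mathbf A}^\perp\dot{\mathbf a}_{\mathrm v}\|_2^2}$ and $\omega_{\mathrm v,k}=\min_{\zeta\in\mathbb R}\|\boldsymbol\Pi_{\mathbf A}^\perp(\dot{\mathbf a}_{\mathrm v}-\zeta\dot{\mathbf a}_{\mathrm u})\|_2^2=\|\boldsymbol\Pi_{\mathbf A}^\perp\dot{\mathbf a}_{\mathrm v}\|_2^2-\frac{\Re\{\dot{\mathbf a}_{\mathrm u}^{\mathsf H}\boldsymbol\Pi_{\mathbf A}^\perp\dot{\mathbf a}_{\mathrm v}\}^2}{\|\boldsymbol\Pi_{\mathbf A}^\perp\dot{\mathbf a}_{\mathrm u}\|_2^2}$ (all vectors evaluated at $(\tilde{\mathbf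 q},\mathbf r_k)$). Further $\zeta^*_{\mathrm u,k}=\frac{\Re\{\dot{\mathbf a}_{\mathrm u}^{\mathsf H}\boldsymbol\Pi_k^\perp\dot{\mathbf a}_{\mathrm v}\}}{\|\boldsymbol\Pi_k^\perp\dot{\mathbf a}_{\mathrm v}\|_2^2}$ and $\zeta^*_{\mathrm v,k}=\frac{\Re\{\dot{\mathbf a}_{\mathrm u}^{\mathsf H}\boldsymbol\Pi_k^\perp\dot{\mathbf a}_{\mathrm v}\}}{\|\boldsymbol\Pi_k^\perp\dot{\mathbf a}_{\mathrm u}\|_2^2}$. $\mu(\tilde{\mathbf x})=\frac1N\sum_nx_n$, $\mathrm{var}(\tilde{\mathbf x})=\frac1N\sum_n(x_n-\mu(\tilde{\mathbf x}))^2$ (same for $\tilde{\mathbf y}$), $\mathrm{cov}(\tilde{\mathbf x},\tilde{\mathbf y})=\frac1N\sum_n(x_n-\mu(\tilde{\mathbf x}))(y_n-\mu(\tilde{\mathbf y}))$. *)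

(* Defs.v *)
From HB Require Import structures.
From mathcomp Require Import all_boot all_order all_algebra.
From mathcomp Require Import all_classical all_reals.
From mathcomp Require Import trigo.
From mathcomp Require Import complex.
Set Implicit Arguments. Unset Strict Implicit. Unset Printing Implicit Defensive.
Import Order.TTheory GRing.Theory Num.Theory.
Local Open Scope ring_scope.

Section Defs.
Variable R : realType.
Local Notation C := R[i].

Definition expj (t : R) : C := Complex (cos t) (sin t).
Definition jC : C := Complex 0 1.
Definition cR (x : R) : C := Complex x 0.

Definition hermT m n (M : 'M[C]_(m, n)) : 'M[C]_(n, m) :=
  \matrix_(i, j) conjc (M j i).

Definition norm2 n (v : 'cV[C]_n) : R := \sum_i (complex.Re (v i 0) ^+ 2 + complex.Im (v i 0) ^+ 2).

Definition reip n (v w : 'cV[C]_n) : R := complex.Re ((hermT v *m w) 0 0).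

Variables (N K : nat) (lambda : R).
Variables (x y : 'I_N -> R).   (* antenna coordinates x_n, y_n *)

(* steering vector a(q, r), r = [u; v] *)
Definition steer (u v : R) : 'cV[C]_N :=
  \col_n expj (2 * pi / lambda * (x n * u + y n * v)).
Definition steer_du (u v : R) : 'cV[C]_N :=
  \col_n (jC * cR (2 * pi / lambda * x n) * expj (2 * pi / lambda * (x n * u + y n * v))).
Definition steer_dv (u v : R) : 'cV[C]_N :=
  \col_n (jC * cR (2 * pi / lambda * y n) * expj (2 * pi / lambda * (x n * u + y n * v))).

Variables (tu tv : 'I_K -> R).  (* target coordinates u_k, v_k *)

Definition steerA : 'M[C]_(N, K) := \matrix_(n, k) steer (tu k) (tv k) n 0.

Definition PiAperp : 'M[C]_N :=
  1%:M - steerA *m invmx (hermT steerA *m steerA) *m hermT steerA.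

Definition Pikperp (k : 'I_K) : 'M[C]_N :=
  let a := steer (tu k) (tv k) in
  1%:M - (cR (norm2 a))^-1 *: (a *m hermT a).

Definition au (k : 'I_K) := steer_du (tu k) (tv k).
Definition av (k : 'I_K) := steer_dv (tu k) (tv k).

Definition omega_u (k : 'I_K) : R :=
  norm2 (PiAperp *m au k)
  - (reip (au k) (PiAperp *m av k)) ^+ 2 / norm2 (PiAperp *m av k).
Definition omega_v (k : 'I_K) : R :=
  norm2 (PiAperp *m av k)
  - (reip (au k) (PiAperp *m av k)) ^+ 2 / norm2 (PiAperp *m au k).

Definition zeta_u (k : 'I_K) : R :=
  reip (au k) (Pikperp k *m av k) / norm2 (Pikperp k *m av k).
Definition zeta_v (k : 'I_K) : R :=
  reip (au k) (Pikperp k *m av k) / norm2 (Pikperp k *m au k).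

End Defs.

Definition mean (R : realType) N (x : 'I_N -> R) : R := (\sum_n x n) / N%:R.
Definition cov (R : realType) N (x y : 'I_N -> R) : R :=
  (\sum_n (x n - mean x) * (y n - mean y)) / N%:R.
Definition var (R : realType) N (x : 'I_N -> R) : R := cov x x.

(* Main.v *)
Require Import Defs.
From HB Require Import structures.
From mathcomp Require Import all_boot all_order all_algebra.
From mathcomp Require Import all_classical all_reals.
From mathcomp Require Import trigo.
From mathcomp Require Import complex.
From mathcomp Require Import ring lra.
Set Implicit Arguments. Unset Strict Implicit. Unset Printing Implicit Defensive.
Import Order.TTheory GRing.Theory Num.Theory.
Local Open Scope ring_scope.
Section Basic.
Variable R : realType.
Local Notation C := R[i].

Lemma ReM (a b : C) : complex.Re (a * b) = complex.Re a * complex.Re b - complex.Im a * complex.Im b.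
Proof. by case: a => ? ?; case: b => ? ?. Qed.
Lemma ImM (a b : C) : complex.Im (a * b) = complex.Re a * complex.Im b + complex.Im a * complex.Re b.
Proof. by case: a => ? ?; case: b => ? ?. Qed.
Lemma ReD (a b : C) : complex.Re (a + b) = complex.Re a + complex.Re b.
Proof. by case: a => ? ?; case: b => ? ?. Qed.
Lemma ImD (a b : C) : complex.Im (a + b) = complex.Im a + complex.Im b.
Proof. by case: a => ? ?; case: b => ? ?. Qed.
Lemma ReN (a : C) : complex.Re (- a) = - complex.Re a.
Proof. by case: a. Qed.
Lemma ImN (a : C) : complex.Im (- a) = - complex.Im a.
Proof. by case: a. Qed.
Lemma ReJ (a : C) : complex.Re (conjc a) = complex.Re a.
Proof. by case: a. Qed.
Lemma ImJ (a : C) : complex.Im (conjc a) = - complex.Im a.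
Proof. by case: a. Qed.
Lemma Re_sum (I : finType) (F : I -> C) : complex.Re (\sum_i F i) = \sum_i complex.Re (F i).
Proof. by apply: (big_morph _ ReD). Qed.
Lemma Im_sum (I : finType) (F : I -> C) : complex.Im (\sum_i F i) = \sum_i complex.Im (F i).
Proof. by apply: (big_morph _ ImD). Qed.
Lemma ReR (t : R) : complex.Re (cR t) = t. Proof. by []. Qed.
Lemma ImR (t : R) : complex.Im (cR t) = 0. Proof. by []. Qed.
Lemma Re0 : complex.Re (0 : C) = 0. Proof. by []. Qed.
Lemma Im0 : complex.Im (0 : C) = 0. Proof. by []. Qed.
Lemma ReZ (t : R) (a : C) : complex.Re (cR t * a) = t * complex.Re a.
Proof. by rewrite ReM ReR ImR mul0r subr0. Qed.
Lemma ImZ (t : R) (a : C) : complex.Im (cR t * a) = t * complex.Im a.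
Proof. by rewrite ImM ReR ImR mul0r addr0. Qed.
Lemma complex_ext (a b : C) : complex.Re a = complex.Re b -> complex.Im a = complex.Im b -> a = b.
Proof. by case: a => ? ?; case: b => ? ? /= -> ->. Qed.

Lemma cR_rmorph : @cR R = real_complex R. Proof. by []. Qed.

Lemma hermT_mul m n p (A : 'M[C]_(m, n)) (B : 'M[C]_(n, p)) :
  hermT (A *m B) = hermT B *m hermT A.
Proof.
apply/matrixP => i j; rewrite !mxE rmorph_sum; apply: eq_bigr => l _.
by rewrite !mxE rmorphM mulrC.
Qed.
Lemma hermTK m n (A : 'M[C]_(m, n)) : hermT (hermT A) = A.
Proof. by apply/matrixP => i j; rewrite !mxE conjcK. Qed.
Lemma hermTB m n (A B : 'M[C]_(m, n)) : hermT (A - B) = hermT A - hermT B.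
Proof. by apply/matrixP => i j; rewrite !mxE rmorphB. Qed.
Lemma hermT1 n : hermT (1%:M : 'M[C]_n) = 1%:M.
Proof.
by apply/matrixP => i j; rewrite !mxE conjc_nat eq_sym.
Qed.
Lemma hermT0 m n : hermT (0 : 'M[C]_(m, n)) = 0.
Proof. by apply/matrixP => i j; rewrite !mxE conjc0. Qed.
Lemma hermTZ m n (c : C) (A : 'M[C]_(m, n)) : hermT (c *: A) = conjc c *: hermT A.
Proof. by apply/matrixP => i j; rewrite !mxE rmorphM. Qed.

Lemma ipE n (v w : 'cV[C]_n) : (hermT v *m w) 0 0 = \sum_i conjc (v i 0) * w i 0.
Proof. by rewrite mxE; apply: eq_bigr => i _; rewrite mxE. Qed.

Lemma reipE n (v w : 'cV[C]_n) : reip v w =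
  \sum_i (complex.Re (v i 0) * complex.Re (w i 0) + complex.Im (v i 0) * complex.Im (w i 0)).
Proof.
rewrite /reip ipE Re_sum; apply: eq_bigr => i _.
by rewrite ReM ReJ ImJ mulNr opprK.
Qed.

Lemma norm2E n (v : 'cV[C]_n) : norm2 v = reip v v.
Proof. by rewrite reipE /norm2; apply: eq_bigr => i _; rewrite !expr2. Qed.

Lemma reipC n (v w : 'cV[C]_n) : reip v w = reip w v.
Proof. by rewrite !reipE; apply: eq_bigr => i _; rewrite mulrC [X in _ + X]mulrC. Qed.

Lemma reipDr n (u v w : 'cV[C]_n) : reip u (v + w) = reip u v + reip u w.
Proof. by rewrite !reipE -big_split; apply: eq_bigr => i _ /=; rewrite !mxE ReD ImD; ring. Qed.
Lemma reipNr n (u v : 'cV[C]_n) : reip u (- v) = - reip u v.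
Proof. by rewrite !reipE -sumrN; apply: eq_bigr => i _; rewrite !mxE ReN ImN; ring. Qed.
Lemma reipBr n (u v w : 'cV[C]_n) : reip u (v - w) = reip u v - reip u w.
Proof. by rewrite reipDr reipNr. Qed.
Lemma reipZr n (t : R) (u v : 'cV[C]_n) : reip u (cR t *: v) = t * reip u v.
Proof. by rewrite !reipE mulr_sumr; apply: eq_bigr => i _; rewrite !mxE ReZ ImZ; ring. Qed.
Lemma reipBl n (u v w : 'cV[C]_n) : reip (v - w) u = reip v u - reip w u.
Proof. by rewrite reipC reipBr !(reipC u). Qed.
Lemma reipZl n (t : R) (u v : 'cV[C]_n) : reip (cR t *: v) u = t * reip v u.
Proof. by rewrite reipC reipZr reipC. Qed.

Lemma reip_adj n (M : 'M[C]_n) (v w : 'cV[C]_n) : reip v (M *m w) = reip (hermT M *m v) w.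
Proof. by rewrite /reip hermT_mul hermTK mulmxA. Qed.

Lemma norm2_ge0 n (v : 'cV[C]_n) : 0 <= norm2 v.
Proof. by apply: sumr_ge0 => i _; apply: addr_ge0; apply: sqr_ge0. Qed.

Lemma norm2_eq0 n (v : 'cV[C]_n) : norm2 v = 0 -> v = 0.
Proof.
move=> /eqP; rewrite psumr_eq0; last by move=> i _; apply: addr_ge0; apply: sqr_ge0.
move=> /allP H; apply/matrixP => i j; rewrite ord1 mxE.
have /implyP := H i (mem_index_enum _); move=> /(_ isT).
rewrite paddr_eq0 ?sqr_ge0 // !sqrf_eq0 => /andP[/eqP h1 /eqP h2].
by apply: complex_ext.
Qed.

Lemma norm2B n (v w : 'cV[C]_n) : norm2 (v - w) = norm2 v - 2 * reip v w + norm2 w.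
Proof. rewrite !norm2E reipBl !reipBr (reipC w v); ring. Qed.
Lemma norm2Z n t (v : 'cV[C]_n) : norm2 (cR t *: v) = t ^+ 2 * norm2 v.
Proof. rewrite !norm2E reipZl reipZr; ring. Qed.

End Basic.

Section Proj.
Variable R : realType.
Local Notation C := R[i].
Variables (n m : nat) (A : 'M[C]_(n, m)).
Hypothesis Hrank : \rank A = m.

Let G := hermT A *m A.
Let M := invmx G.
Let P := 1%:M - A *m M *m hermT A.

Lemma GH : hermT G = G.
Proof. by rewrite /G hermT_mul hermTK. Qed.

Lemma G_unit : G \in unitmx.
Proof.
rewrite -row_free_unit; apply: inj_row_free => u Hu.
set v := hermT u.
have Gv : hermT A *m (A *m v) = 0.
  by rewrite mulmxA -/G -GH /v -hermT_mul Hu hermT0.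
have Av0 : A *m v = 0.
  apply: norm2_eq0; rewrite norm2E /reip hermT_mul -mulmxA Gv mulmx0 mxE //.
have rfA : row_free A^T by rewrite /row_free mxrank_tr Hrank.
have : v^T *m A^T = 0 *m A^T by rewrite -trmx_mul Av0 mul0mx trmx0.
move/(row_free_inj rfA) => /(congr1 trmx); rewrite trmxK trmx0 => v0.
by rewrite -[u]hermTK -/v v0 hermT0.
Qed.

Lemma MH : hermT M = M.
Proof.
have h1 : hermT M *m G = 1%:M by rewrite -GH -hermT_mul mulmxV ?G_unit ?hermT1.
by rewrite -[hermT M]mulmx1 -(mulmxV G_unit) mulmxA h1 mul1mx.
Qed.

Lemma PH : hermT P = P.
Proof. by rewrite /P hermTB hermT1 !hermT_mul hermTK MH mulmxA. Qed.

Lemma PA : P *m A = 0.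
Proof. by rewrite /P mulmxBl mul1mx -!mulmxA -/G mulVmx ?G_unit // mulmx1 subrr. Qed.

Lemma AP : hermT A *m P = 0.
Proof. by rewrite -PH -hermT_mul PA hermT0. Qed.

Lemma PP : P *m P = P.
Proof. by rewrite {1}/P mulmxBl mul1mx -!mulmxA AP !mulmx0 subr0. Qed.

Lemma IP : 1%:M - P = A *m M *m hermT A.
Proof. by rewrite /P opprB addrC subrK. Qed.

End Proj.

Section Core.
Variable R : realType.
Local Notation C := R[i].
Variables (n : nat) (P : 'M[C]_n).
Hypotheses (HPH : hermT P = P) (HPP : P *m P = P).

Lemma reipP (v w : 'cV[C]_n) : reip v (P *m w) = reip (P *m v) w.
Proof. by rewrite reip_adj HPH. Qed.

Lemma reipPP (v w : 'cV[C]_n) : reip v (P *m w) = reip (P *m v) (P *m w).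
Proof. by rewrite -{1}HPP -mulmxA reipP. Qed.

Lemma pyth (q : 'cV[C]_n) : norm2 q = norm2 (P *m q) + norm2 (q - P *m q).
Proof.
rewrite norm2B (reipPP q q) -norm2E; ring.
Qed.

Lemma core (d1 d2 q : 'cV[C]_n) (z : R) :
  P *m q = P *m (d1 - cR z *: d2) -> 0 < norm2 (P *m d2) ->
  let om := norm2 (P *m d1) - reip d1 (P *m d2) ^+ 2 / norm2 (P *m d2) in
  [/\ om <= norm2 q, (om = norm2 q -> q = P *m q) &
      (q = P *m q -> reip q d2 = 0 -> om = norm2 q)].
Proof.
move=> Hq Hb om.
set r := reip d1 (P *m d2); set al := norm2 (P *m d1); set be := norm2 (P *m d2).
have Er : r = reip (P *m d1) (P *m d2) by rewrite /r reipPP.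
have Eg : norm2 (P *m q) = al - 2 * z * r + z ^+ 2 * be.
  rewrite Hq mulmxBr -scalemxAr norm2B norm2Z reipZr -Er /al /be; ring.
have bne : be != 0 by rewrite gt_eqF.
have Ed : norm2 (P *m q) - om = (z * be - r) ^+ 2 / be.
  rewrite Eg /om -/r -/al -/be; field; exact: bne.
have gap1 : 0 <= norm2 (P *m q) - om.
  by rewrite Ed divr_ge0 ?sqr_ge0 // ltW.
have gap2 := norm2_ge0 (q - P *m q).
have Pq := pyth q.
split.
- lra.
- move=> Heq.
  have h0 : norm2 (q - P *m q) = 0 by lra.
  by apply/eqP; rewrite -subr_eq0; apply/eqP; apply: norm2_eq0.
- move=> HqP Hr.
  have h2 : norm2 (q - P *m q) = 0.
    rewrite -HqP subrr /norm2 big1 // => i _; by rewrite mxE /= expr0n /= addr0.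
  have h3 : reip (P *m q) (P *m d2) = r - z * be.
    by rewrite Hq mulmxBr -scalemxAr reipBl reipZl -Er -norm2E.
  have h4 : reip (P *m q) (P *m d2) = 0.
    by rewrite reipP mulmxA HPP -HqP.
  have h5 : (z * be - r) = 0 by lra.
  move: Ed; rewrite h5 expr0n /= mul0r => Ed.
  lra.
Qed.

End Core.

Section Concrete.
Variable R : realType.
Local Notation C := R[i].
Variables (N K : nat) (lambda : R) (x y : 'I_N -> R) (tu tv : 'I_K -> R) (k : 'I_K).

Definition th (n : 'I_N) := 2 * pi / lambda * (x n * tu k + y n * tv k).
Definition phi (f : 'I_N -> R) : 'cV[C]_N :=
  \col_n (@jC R * cR (2 * pi / lambda * f n) * expj (th n)).
Local Notation cc := (2 * pi / lambda).

Lemma au_phi : au lambda x y tu tv k = phi x. Proof. by []. Qed.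
Lemma av_phi : av lambda x y tu tv k = phi y. Proof. by []. Qed.

Lemma Re_ent (t u : R) : complex.Re (@jC R * cR t * expj u) = - t * sin u.
Proof. by rewrite ReM ImM /jC /cR /expj /=; ring. Qed.
Lemma Im_ent (t u : R) : complex.Im (@jC R * cR t * expj u) = t * cos u.
Proof. by rewrite ImM ReM /jC /cR /expj /=; ring. Qed.

Lemma reip_phi f g : reip (phi f) (phi g) = cc ^+ 2 * \sum_n f n * g n.
Proof.
rewrite reipE mulr_sumr; apply: eq_bigr => n _; rewrite !mxE !Re_ent !Im_ent.
have h := cos2Dsin2 (th n).
transitivity (cc ^+ 2 * (f n * g n) * (cos (th n) ^+ 2 + sin (th n) ^+ 2)); first ring.
by rewrite h mulr1.
Qed.

Lemma norm2_phi f : norm2 (phi f) = cc ^+ 2 * \sum_n f n ^+ 2.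
Proof. by rewrite norm2E reip_phi; congr (_ * _); apply: eq_bigr => n _; rewrite expr2. Qed.

Lemma phiB f g (s : R) : phi f - cR s *: phi g = phi (fun n => f n - s * g n).
Proof.
apply/matrixP => i j; rewrite !mxE cR_rmorph !(rmorphM, rmorphB) /=. ring.
Qed.

Local Notation a := (steer lambda x y (tu k) (tv k)).

Lemma a_ent n : a n 0 = expj (th n). Proof. by rewrite mxE. Qed.

Lemma norm2_a : norm2 a = N%:R.
Proof.
rewrite /norm2 (eq_bigr (fun _ => 1)); last first.
  by move=> n _; rewrite a_ent /= cos2Dsin2.
by rewrite sumr_const card_ord.
Qed.

Lemma conj_e_ent t u : conjc (expj u) * (@jC R * cR t * expj u) = @jC R * cR t.
Proof.
apply: complex_ext.
- rewrite ReM Re_ent Im_ent ReJ ImJ /expj /jC /cR /=; ring.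
- rewrite ImM Re_ent Im_ent ReJ ImJ /expj /jC /cR /=.
  have h := cos2Dsin2 u.
  transitivity (t * (cos u ^+ 2 + sin u ^+ 2)); first ring.
  by rewrite h mulr1; ring.
Qed.

Definition mean' (f : 'I_N -> R) := (\sum_n f n) / N%:R.

Lemma Q_phi f : (0 < N)%N ->
  Pikperp lambda x y tu tv k *m phi f = phi (fun n => f n - mean' f).
Proof.
move=> N0.
rewrite /Pikperp /= norm2_a mulmxBl mul1mx -scalemxAl -mulmxA.
apply/matrixP => i j; rewrite ord1 !mxE big_ord1 ipE.
rewrite (eq_bigr (fun n => @jC R * cR (cc * f n))); last first.
  by move=> n _; rewrite a_ent mxE conj_e_ent.
rewrite -mulr_sumr a_ent /mean' ?mxE.
rewrite cR_rmorph -rmorph_sum -mulr_sumr !(rmorphM, rmorphB) !fmorphV /=.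
ring.
Qed.

End Concrete.

Section Stats.
Variable R : realType.
Variable N : nat.
Hypothesis HN : (0 < N)%N.

Lemma Nne0 : (N%:R : R) != 0.
Proof. by rewrite pnatr_eq0 -lt0n. Qed.

Definition cent (f : 'I_N -> R) n := f n - mean' f.

Lemma sum_cent f : \sum_n cent f n = 0.
Proof.
rewrite /cent sumrB sumr_const card_ord /mean'.
have -> : forall c : R, c *+ N = c * N%:R by move=> c; rewrite mulr_natr.
rewrite divfK ?subrr //; exact: Nne0.
Qed.

Lemma sum_shift (h g : 'I_N -> R) : \sum_n h n = 0 ->
  \sum_n h n * g n = \sum_n h n * cent g n.
Proof.
move=> H0; have : \sum_n h n * cent g n = \sum_n h n * g n - mean' g * \sum_n h n.
  by rewrite mulr_sumr -sumrB; apply: eq_bigr => n _; rewrite /cent; ring.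
by rewrite H0 mulr0 subr0 => ->.
Qed.

Lemma mean'B f g (s : R) : mean' (fun n : 'I_N => f n - s * g n) = mean' f - s * mean' g.
Proof. by rewrite /mean' sumrB -mulr_sumr; field; exact: Nne0. Qed.

Lemma centB f g (s : R) n : cent (fun n : 'I_N => f n - s * g n) n = cent f n - s * cent g n.
Proof. by rewrite /cent mean'B; ring. Qed.

Lemma sq_sum (a b : 'I_N -> R) (z : R) :
  \sum_n (a n - z * b n) ^+ 2 =
  \sum_n a n ^+ 2 - 2 * z * \sum_n a n * b n + z ^+ 2 * \sum_n b n ^+ 2.
Proof.
rewrite !mulr_sumr -sumrB -big_split /=; apply: eq_bigr => n _; ring.
Qed.

Lemma cov_cent (f g : 'I_N -> R) : cov f g = (\sum_n cent f n * cent g n) / N%:R.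
Proof. by []. Qed.

Lemma covC (f g : 'I_N -> R) : cov f g = cov g f.
Proof. by rewrite /cov; congr (_ / _); apply: eq_bigr => n _; rewrite mulrC. Qed.

End Stats.

Section Half.
Variable R : realType.
Local Notation C := R[i].
Variables (N K : nat) (lambda : R) (x y : 'I_N -> R) (tu tv : 'I_K -> R) (k : 'I_K).
Hypotheses (HN : (0 < N)%N) (Hl : 0 < lambda)
  (Hrank : \rank (steerA lambda x y tu tv) = K).
Local Notation A := (steerA lambda x y tu tv).
Local Notation Pm := (PiAperp lambda x y tu tv).
Local Notation Q := (Pikperp lambda x y tu tv k).
Local Notation ph := (phi lambda x y tu tv k).
Local Notation cc := (2 * pi / lambda).

Lemma PmH : hermT Pm = Pm. Proof. exact: PH Hrank. Qed.
Lemma PmPm : Pm *m Pm = Pm. Proof. exact: PP Hrank. Qed.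
Lemma PmA : Pm *m A = 0. Proof. exact: PA Hrank. Qed.
Lemma APm : hermT A *m Pm = 0. Proof. exact: AP Hrank. Qed.
Lemma IPm : 1%:M - Pm = A *m invmx (hermT A *m A) *m hermT A.
Proof. exact: IP. Qed.

Lemma a_col : steer lambda x y (tu k) (tv k) = A *m delta_mx k 0.
Proof. by rewrite -colE; apply/matrixP => i j; rewrite ord1 !mxE. Qed.

Lemma PQ (v : 'cV[C]_N) : Pm *m (Q *m v) = Pm *m v.
Proof.
rewrite mulmxA /Pikperp /= mulmxBr mulmx1 -scalemxAr mulmxA a_col mulmxA PmA.
by rewrite !mul0mx scaler0 subr0.
Qed.

Lemma cc_ne0 : cc != 0.
Proof. by rewrite mulf_neq0 ?invr_eq0 ?gt_eqF ?mulr_gt0 ?pi_gt0. Qed.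

Lemma half (f g : 'I_N -> R) :
  Pm *m ph g != 0 -> 0 < var g ->
  let z := reip (ph f) (Q *m ph g) / norm2 (Q *m ph g) in
  let om := norm2 (Pm *m ph f) - reip (ph f) (Pm *m ph g) ^+ 2 / norm2 (Pm *m ph g) in
  let B := 4 * pi ^+ 2 * N%:R / lambda ^+ 2 * (var f - cov f g ^+ 2 / var g) in
  om <= B /\ (om = B <-> hermT A *m (Q *m (ph f - cR z *: ph g)) = 0).
Proof.
move=> Hg Hv z om B.
have QH h : Q *m ph h = ph (cent h) by rewrite Q_phi.
set Sff := \sum_n cent f n * cent f n.
set Sfg := \sum_n cent f n * cent g n.
set Sgg := \sum_n cent g n * cent g n.
have NN := Nne0 R HN.
have Sgg0 : 0 < Sgg.
  move: Hv; rewrite /var cov_cent -/Sgg => Hv.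
  by rewrite -(divfK NN Sgg) mulr_gt0 // ltr0n.
have ccne := cc_ne0.
have fc (h1 h2 : 'I_N -> R) : \sum_n h1 n * cent h2 n = \sum_n cent h1 n * cent h2 n.
  rewrite (eq_bigr (fun n => cent h2 n * h1 n)); last by move=> n _; rewrite mulrC.
  rewrite (sum_shift _ (sum_cent HN h2)); apply: eq_bigr => n _; exact: mulrC.
have sq (h : 'I_N -> R) : \sum_n cent h n ^+ 2 = \sum_n cent h n * cent h n.
  by apply: eq_bigr => n _; rewrite expr2.
have Ez : z = Sfg / Sgg.
  rewrite /z !QH reip_phi norm2_phi fc -/Sfg sq -/Sgg.
  have pg := pi_gt0 R; move: pg; generalize (@pi R) => p pg.
  by field; rewrite (lt0r_neq0 Sgg0) (gt_eqF Hl) (gt_eqF pg).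
have Ew : ph f - cR z *: ph g = ph (fun n => f n - z * g n) by rewrite phiB.
set q := Q *m (ph f - cR z *: ph g).
have Eq : q = ph (fun n => cent f n - z * cent g n).
  by rewrite /q Ew QH; apply/matrixP => i j; rewrite !mxE centB.
have Hq : Pm *m q = Pm *m (ph f - cR z *: ph g) by rewrite /q PQ.
have Hb : 0 < norm2 (Pm *m ph g).
  rewrite lt_def norm2_ge0 andbT; apply/eqP => /norm2_eq0 H0.
  by move: Hg; rewrite H0 eqxx.
have [Hle Hto Hfrom] := core PmH PmPm Hq Hb.
have pg := pi_gt0 R.
have Bq : norm2 q = B.
  rewrite Eq norm2_phi sq_sum !sq -/Sff -/Sgg /B /var !cov_cent -/Sff -/Sfg -/Sgg Ez.
  move: pg ccne; generalize (@pi R) => p pg ccne.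
  by field; rewrite (lt0r_neq0 Sgg0) (gt_eqF Hl) NN.
have sum0 : \sum_n (cent f n - z * cent g n) = 0.
  by rewrite sumrB -mulr_sumr !(sum_cent HN) mulr0 subr0.
have rq : reip q (ph g) = 0.
  rewrite Eq reip_phi (sum_shift _ sum0).
  have -> : \sum_n (cent f n - z * cent g n) * cent g n = Sfg - z * Sgg.
    by rewrite /Sfg /Sgg mulr_sumr -sumrB; apply: eq_bigr => n _; ring.
  by rewrite Ez divfK ?subrr ?mulr0 // (lt0r_neq0 Sgg0).
split; first by rewrite -Bq.
split.
- rewrite -Bq => /Hto HqP.
  by rewrite HqP mulmxA APm mul0mx.
- move=> H0; rewrite -Bq; apply: Hfrom => //.
  apply/eqP; rewrite -subr_eq0; apply/eqP.
  by rewrite -{1}[q]mul1mx -mulmxBl IPm -[_ *m hermT A *m q]mulmxA H0 mulmx0.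
Qed.

Lemma fc' (h1 h2 : 'I_N -> R) : \sum_n h1 n * cent h2 n = \sum_n cent h1 n * cent h2 n.
Proof.
rewrite (eq_bigr (fun n => cent h2 n * h1 n)); last by move=> n _; rewrite mulrC.
rewrite (sum_shift _ (sum_cent HN h2)); apply: eq_bigr => n _; exact: mulrC.
Qed.

Lemma reipQ_sym f g : reip (ph f) (Q *m ph g) = reip (ph g) (Q *m ph f).
Proof.
rewrite !Q_phi // !(@reip_phi R N K lambda x y tu tv k).
have e1 := fc' f g; have e2 := fc' g f; rewrite /cent in e1 e2.
rewrite e1 e2; congr (_ * _).
by apply: eq_bigr => n _; rewrite mulrC.
Qed.

Lemma reipPm_sym f g : reip (ph f) (Pm *m ph g) = reip (ph g) (Pm *m ph f).
Proof. by rewrite (reipP PmH) reipC. Qed.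
End Half.

Theorem mainTheorem3 (R : realType) (N K : nat) (lambda : R)
  (x y : 'I_N -> R) (tu tv : 'I_K -> R) (k : 'I_K) :
  (K < N)%N -> (1 <= K)%N -> 0 < lambda ->
  \rank (steerA lambda x y tu tv) = K ->
  0 < var x -> 0 < var y ->
  PiAperp lambda x y tu tv *m au lambda x y tu tv k != 0 ->
  PiAperp lambda x y tu tv *m av lambda x y tu tv k != 0 ->
  let bu := 4 * pi ^+ 2 * N%:R / lambda ^+ 2 * (var x - cov x y ^+ 2 / var y) in
  let bv := 4 * pi ^+ 2 * N%:R / lambda ^+ 2 * (var y - cov x y ^+ 2 / var x) in
  [/\ omega_u lambda x y tu tv k <= bu,
      omega_v lambda x y tu tv k <= bv,
      omega_u lambda x y tu tv k = bu <->
        hermT (steerA lambda x y tu tv) *m (Pikperp lambda x y tu tv k *m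
          (au lambda x y tu tv k
           - cR (zeta_u lambda x y tu tv k) *: av lambda x y tu tv k)) = 0
    & omega_v lambda x y tu tv k = bv <->
        hermT (steerA lambda x y tu tv) *m (Pikperp lambda x y tu tv k *m
          (av lambda x y tu tv k
           - cR (zeta_v lambda x y tu tv k) *: au lambda x y tu tv k)) = 0].
Proof.
move=> HKN HK1 Hl Hrank Hvx Hvy Hu Hv bu bv.
have HN : (0 < N)%N by apply: leq_ltn_trans HKN.
have [h1 h2] := @half R N K lambda x y tu tv k HN Hl Hrank x y Hv Hvy.
have [h3 h4] := @half R N K lambda x y tu tv k HN Hl Hrank y x Hu Hvx.
have Eov : omega_v lambda x y tu tv k =
  norm2 (PiAperp lambda x y tu tv *m phi lambda x y tu tv k y) -
  reip (phi lambda x y tu tv k y) (PiAperp lambda x y tu tv *m phi lambda x y tu tv k x) ^+ 2 /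
  norm2 (PiAperp lambda x y tu tv *m phi lambda x y tu tv k x).
  by rewrite /omega_v au_phi av_phi (reipPm_sym k Hrank x y).
have Ezv : zeta_v lambda x y tu tv k =
  reip (phi lambda x y tu tv k y) (Pikperp lambda x y tu tv k *m phi lambda x y tu tv k x) /
  norm2 (Pikperp lambda x y tu tv k *m phi lambda x y tu tv k x).
  by rewrite /zeta_v au_phi av_phi (reipQ_sym lambda x y tu tv k HN x y).
have Ebv : bv = 4 * pi ^+ 2 * N%:R / lambda ^+ 2 * (var y - cov y x ^+ 2 / var x).
  by rewrite /bv covC.
split.
- exact: h1.
- by rewrite Eov Ebv.
- exact: h2.
- by rewrite Eov Ebv Ezv.
Qed.
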